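(* Let $\mathcal{Y}_c,\mathcal{Y}$ be output alphabets with $\{0,1,\dots,\alpha\}\subseteq\mathcal{Y}_c\subseteq\mathcal{Y}\subseteq\mathbb{Z}$. Then there exists a function $F_n:\mathcal{Y}^n\to\mathcal{Y}_c^n$ (not depending on $s_0$ or $\mathbf{x}$) such that for every $(s_0,\mathbf{x})\in\mathcal{S}\times\mathcal{X}^n$ and every $\mathbf{y}\in\mathcal{Y}^n(s_0,\mathbf{x})$ we have $F_n(\mathbf{y})\in\mathcal{Y}_c^n(s_0,\mathbf{x})$.
   Context: Fix integers $\alpha\ge 1$ (maximal consumption per step), $\beta\ge 0$ (battery capacity), and $n\ge 1$. Let $\mathcal{X}=\{0,1,\dots,\alpha\}$ and $\mathcal{S}=\{0,1,\dots,\beta\}$. For an initial battery state $s_0\in\mathcal{S}$, a consumption sequence $\mathbf{x}=(x_0,\dots,x_{n-1})\in\mathcal{X}^n$ and a request sequence $\mathbf{y}=(y_0,\dots,y_{n-1})\in\mathbb{Z}^n$, the battery states are $s_i=s_0+\sum_{k=0}^{i-1}y_k-\sum_{k=0}^{i-1}x_k$ for $i=0,1,\dots,n$. For an output alphabet $\mathcal{Y}\subseteq\mathbb{Z}$, the set of feasible requests is $\mathcal{Y}^n(s_0,\mathbf{x})=\{\mathbf{y}\in\mathcal{Y}^n: s_i\in\{0,\dots,\beta\}\text{ for all } i=0,\dots,n\}$. *)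

(* Defs.v *)
From HB Require Import structures.
From mathcomp Require Import all_boot all_order all_algebra.
Set Implicit Arguments. Unset Strict Implicit. Unset Printing Implicit Defensive.
Import Order.TTheory GRing.Theory Num.Theory.
Local Open Scope ring_scope.

Definition bstate (n : nat) (s0 : int) (x y : n.-tuple int) (i : nat) : int :=
  s0 + \sum_(k < n | (k < i)%N) tnth y k - \sum_(k < n | (k < i)%N) tnth x k.

Definition in_S (beta : nat) (s0 : int) : Prop := 0 <= s0 <= beta%:Z.

Definition in_Xn (alpha n : nat) (x : n.-tuple int) : Prop :=
  forall k : 'I_n, 0 <= tnth x k <= alpha%:Z.

Definition in_alph (n : nat) (Y : pred int) (y : n.-tuple int) : Prop :=
  forall k : 'I_n, Y (tnth y k).

Definition feasible (beta n : nat) (Y : pred int) (s0 : int) (x y : n.-tuple int)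
  : Prop :=
  in_alph Y y /\
  forall i : nat, (i <= n)%N -> 0 <= bstate s0 x y i <= beta%:Z.

(* Main.v *)
Require Import Defs.
From HB Require Import structures.
From mathcomp Require Import all_boot all_order all_algebra.
From mathcomp Require Import zify.
Import Order.TTheory GRing.Theory Num.Theory.
Local Open Scope ring_scope.

Definition clampz (alpha : nat) (a : int) : int :=
  if a < 0 then 0 else if alpha%:Z < a then alpha%:Z else a.

Fixpoint debt (alpha : nat) (y : seq int) (i : nat) : int :=
  match i with
  | 0 => 0
  | j.+1 => debt alpha y j + nth 0 y j - clampz alpha (nth 0 y j + debt alpha y j)
  end.

Lemma sum_widen (n i : nat) (t : n.-tuple int) : (i <= n)%N ->
  \sum_(k < n | (k < i)%N) tnth t k = \sum_(k < i) nth 0 t k.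
Proof.
move=> hi.
rewrite (big_ord_widen n (fun k => nth 0 (tval t) k) hi).
by apply: eq_bigr => k _; rewrite (tnth_nth 0).
Qed.

Lemma bsE n s0 (x y : n.-tuple int) i : (i <= n)%N ->
  bstate s0 x y i = s0 + \sum_(k < i) nth 0 y k - \sum_(k < i) nth 0 x k.
Proof. by move=> hi; rewrite /bstate !sum_widen. Qed.

Definition Fz (alpha n : nat) (y : n.-tuple int) : n.-tuple int :=
  [tuple clampz alpha (tnth y k + debt alpha y k) | k < n].

Lemma clamp_in alpha a : 0 <= clampz alpha a <= alpha%:Z.
Proof. rewrite /clampz; case: ifP => h1; first by rewrite lexx /=.
case: ifP => h2; first by rewrite lexx andbT.
apply/andP; split; lia. Qed.

Lemma nth_Fz alpha n (y : n.-tuple int) k : (k < n)%N ->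
  nth 0 (@Fz alpha n y) k = clampz alpha (nth 0 y k + debt alpha y k).
Proof.
move=> hk; have := tnth_nth 0 (@Fz alpha n y) (Ordinal hk).
by rewrite tnth_mktuple /= (tnth_nth 0) /= => <-.
Qed.

Lemma sum_Fz alpha n (y : n.-tuple int) i : (i <= n)%N ->
  \sum_(k < i) nth 0 y k - \sum_(k < i) nth 0 (@Fz alpha n y) k = debt alpha y i.
Proof.
elim: i => [|i IH] hi; first by rewrite !big_ord0 subrr.
rewrite !big_ord_recr /= nth_Fz // -(IH (ltnW hi)).
set c := clampz _ _; set a := \sum_(k < i) _; set b := \sum_(k < i) _.
rewrite -/a -/b; lia.
Qed.

Theorem lemma2 (alpha beta n : nat) (Yc Y : pred int) :
  (1 <= alpha)%N ->
  (forall z : int, 0 <= z <= alpha%:Z -> Yc z) ->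
  (forall z : int, Yc z -> Y z) ->
  exists F : n.-tuple int -> n.-tuple int,
    (forall y, in_alph Y y -> in_alph Yc (F y)) /\
    (forall (s0 : int) (x y : n.-tuple int),
        in_S beta s0 -> in_Xn alpha x ->
        feasible beta Y s0 x y -> feasible beta Yc s0 x (F y)).
Proof.
move=> _ hYc _; exists (@Fz alpha n).
have hA : forall y, in_alph Yc (@Fz alpha n y).
  by move=> y k; rewrite tnth_mktuple; apply: hYc; apply: clamp_in.
split=> // s0 x y hs0 hx [_ hy]; split=> //.
have key : forall i, (i <= n)%N ->
  bstate s0 x (@Fz alpha n y) i = bstate s0 x y i - debt alpha y i.
  move=> i hi; rewrite !bsE // -(@sum_Fz alpha n y i hi).
  set a := \sum_(k < i) _; set b := \sum_(k < i) _; set c := \sum_(k < i) _.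
  lia.
elim=> [|i IH] hi.
  by rewrite key //= subr0; apply: hy.
have hi' := ltnW hi.
have IH' := IH hi'; rewrite key // in IH'.
rewrite key //.
have hyi := hy _ hi; have hyi0 := hy _ (ltnW hi).
rewrite !bsE // in hyi hyi0 IH' *.
rewrite !big_ord_recr /= in hyi *.
have hxi : 0 <= nth 0 x i <= alpha%:Z.
  by have := hx (Ordinal hi); rewrite (tnth_nth 0).
move: hyi hyi0 IH' hxi.
set a := \sum_(k < i) _; set b := \sum_(k < i) _.
set d := debt alpha y i; set yi := nth 0 y i; set xi := nth 0 x i.
rewrite /clampz; case: ifP => h1; [|case: ifP => h2]; lia.
Qed.
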